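(* Let $q$ be a prime power and $m$ a positive integer with $\gcd(m,q)=1$, and let $R=\mathbb{F}_q[x]/\langle x^m-1\rangle$. Let $C$ and $D$ be one-generator quasi-cyclic codes of length $2m$ and index $2$ over $\mathbb{F}_q$, i.e. $C$ is the $R$-submodule of $R^2$ generated by $(g_{11}(x),g_{12}(x))$ and $D$ is the $R$-submodule generated by $(f_{11}(x),f_{12}(x))$, where $g_{11}(x)\mid x^m-1$ and $f_{11}(x)\mid x^m-1$. Then $(C,D)$ is a linear complementary pair of codes if and only if all of the following hold: (A) $\gcd(g_{11}(x),g_{12}(x))=1$; (B) $\gcd(f_{11}(x),f_{12}(x))=1$; (C) $\gcd\big(x^m-1,\,g_{11}(x)f_{12}(x)-g_{12}(x)f_{11}(x)\big)=1$.
   Context: A pair $(C,D)$ of $\mathbb{F}_q$-linear codes of the same length $n$ is a linear complementary pair (LCP) of codes if $C\cap D=\{0\}$ and $C+D=\mathbb{F}_q^n$. A quasi-cyclic code of length $2m$ and index $2$ is identified with an $R$-submodule of $R^2$ via $(c_{0,0},c_{0,1},c_{1,0},c_{1,1},\dots,c_{m-1,0},c_{m-1,1})\mapsto(c_0(x),c_1(x))$ with $c_j(x)=\sum_{i=0}^{m-1}c_{i,j}x^i$; elements of $R$ are represented by polynomials in $\mathbb{F}_q[x]$. *)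

(* Defs.v *)
From HB Require Import structures.
From mathcomp Require Import all_boot all_order all_algebra all_field.
Set Implicit Arguments. Unset Strict Implicit. Unset Printing Implicit Defensive.
Import GRing.Theory.
Local Open Scope ring_scope.

(* The modulus x^m - 1. Elements of R = F[x]/<x^m-1> are represented by
   their reduced representatives p (i.e. p %% (x^m-1) = p, size p <= m). *)
Definition xm1 (F : fieldType) (m : nat) : {poly F} := 'X^m - 1.

Definition reduced (F : fieldType) (m : nat) (p : {poly F}) : Prop :=
  p %% xm1 F m = p.

(* An element of R^2 = a quasi-cyclic word of length 2m, index 2, via
   (c_{i,j}) |-> (c_0(x), c_1(x)). *)
Definition inR2 (F : fieldType) (m : nat) (c : {poly F} * {poly F}) : Prop :=
  reduced m c.1 /\ reduced m c.2.

Definition qc_code1 (F : fieldType) (m : nat) (g1 g2 : {poly F})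
  (c : {poly F} * {poly F}) : Prop :=
  exists a : {poly F}, c = ((a * g1) %% xm1 F m, (a * g2) %% xm1 F m).

Definition LCP (F : fieldType) (m : nat)
  (C D : {poly F} * {poly F} -> Prop) : Prop :=
  (forall c, C c -> D c -> c = (0, 0)) /\
  (forall c, inR2 m c ->
     exists c1 c2, C c1 /\ D c2 /\ c = (c1.1 + c2.1, c1.2 + c2.2)).

(* Main.v *)
Require Import Defs.
From HB Require Import structures.
From mathcomp Require Import all_boot all_order all_algebra all_field.
From mathcomp Require Import ring.
Import GRing.Theory.
Local Open Scope ring_scope.

Lemma dvd_modM {F : fieldType} (x : {poly F}) {d M : {poly F}} : d %| M -> d %| x - x %% M.
Proof.
move=> dM; have {1}-> : x = x %/ M * M + x %% M by apply: divp_eq.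
by rewrite addrK dvdp_mull.
Qed.

Lemma mod_eq_of_dvd {F : fieldType} (M x y : {poly F}) : M %| x - y -> x %% M = y %% M.
Proof.
move=> h; have -> : x = (x - y) + y by rewrite subrK.
by rewrite modpD (modp_eq0 h) add0r.
Qed.

Lemma eqp1_of {F : fieldType} (d : {poly F}) : d %| 1 -> d %= 1.
Proof. by move=> h; rewrite /eqp h dvd1p. Qed.

Theorem theorem4p3 (F : finFieldType) (m : nat) (g11 g12 f11 f12 : {poly F}) :
  (0 < m)%N -> coprime m #|F| ->
  g11 %| xm1 F m -> f11 %| xm1 F m ->
  LCP m (qc_code1 m g11 g12) (qc_code1 m f11 f12) <->
  [/\ coprimep g11 g12, coprimep f11 f12 &
      coprimep (xm1 F m) (g11 * f12 - g12 * f11)].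
Proof.
move=> m0 _ gM fM.
set M := xm1 F m; set Dl := g11 * f12 - g12 * f11.
have sM : size M = m.+1 by rewrite /M /xm1 -[1]/(1%:P) size_XnsubC.
have M0 : M != 0 by rewrite -size_poly_eq0 sM.
have CtoAB : coprimep M Dl -> [/\ coprimep g11 g12, coprimep f11 f12 & coprimep M Dl].
  move=> /coprimepP H; split; last by apply/coprimepP.
  - apply/coprimepP => d d1 d2; apply: H; first exact: dvdp_trans gM.
    by rewrite /Dl dvdp_sub // ?dvdp_mulr // dvdp_mulr.
  - apply/coprimepP => d d1 d2; apply: H; first exact: dvdp_trans fM.
    by rewrite /Dl dvdp_sub // ?dvdp_mull.
split.
- case=> _ Hsum; apply: CtoAB; apply/coprimepP => d dM dD.
  have key : forall s t, d %| s * g11 + t * g12 -> d %| s * f11 + t * f12 ->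
      d %| s /\ d %| t.
    move=> s t h1 h2.
    have gen : forall c1 c2, inR2 m (c1, c2) -> d %| s * c1 + t * c2.
      move=> c1 c2 /Hsum [[x1 x2] [[y1 y2] [[a ea] [[b eb] ec]]]].
      case: ec => -> -> /=; case: ea => -> ->; case: eb => -> ->.
      have e1 := dvd_modM (a * g11) dM; have e2 := dvd_modM (b * f11) dM.
      have e3 := dvd_modM (a * g12) dM; have e4 := dvd_modM (b * f12) dM.
      set A1 := (a * g11) %% M in e1 *; set B1 := (b * f11) %% M in e2 *.
      set A2 := (a * g12) %% M in e3 *; set B2 := (b * f12) %% M in e4 *.
      have -> : s * (A1 + B1) + t * (A2 + B2) =
         a * (s * g11 + t * g12) + b * (s * f11 + t * f12)
         - (s * (a * g11 - A1) + s * (b * f11 - B1)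
            + t * (a * g12 - A2) + t * (b * f12 - B2)).
        by ring.
      apply: dvdp_sub; first by apply: dvdp_add; apply: dvdp_mull.
      by rewrite !dvdp_add // dvdp_mull.
    have r1 : reduced m (1 : {poly F}).
      by rewrite /reduced modp_small // size_poly1 sM.
    have r0 : reduced m (0 : {poly F}) by rewrite /reduced mod0p.
    split.
    + by have := gen 1 0 (conj r1 r0); rewrite mulr1 mulr0 addr0.
    + by have := gen 0 1 (conj r0 r1); rewrite mulr1 mulr0 add0r.
  have [dg11 dg12] : d %| g11 /\ d %| g12.
    have [h1 h2] : d %| g12 /\ d %| - g11.
      apply: key; first by rewrite mulNr mulrC subrr dvdp0.
      have -> : g12 * f11 + - g11 * f12 = - Dl by rewrite /Dl; ring.
      by rewrite dvdpNr.
    by split=> //; rewrite -dvdpNr.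
  have [df11 df12] : d %| f11 /\ d %| f12.
    have [h1 h2] : d %| f12 /\ d %| - f11.
      apply: key; last by rewrite mulNr mulrC subrr dvdp0.
      have -> : f12 * g11 + - f11 * g12 = Dl by rewrite /Dl; ring.
      done.
    by split=> //; rewrite -dvdpNr.
  have [h1 _] : d %| 1 /\ d %| 0.
    by apply: key; rewrite mul1r mul0r addr0.
  exact: eqp1_of.
- case=> _ _ cop; split.
  + move=> [c1 c2] [a ea] [b eb].
    rewrite ea; rewrite ea in eb; case: eb => e1 e2.
    have d1 : M %| a * g11 - b * f11.
      by apply/modp_eq0P; rewrite modpD modpN e1 subrr.
    have d2 : M %| a * g12 - b * f12.
      by apply/modp_eq0P; rewrite modpD modpN e2 subrr.
    have dA : M %| a.
      rewrite -(Gauss_dvdpl _ cop).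
      have -> : a * Dl = f12 * (a * g11 - b * f11) - f11 * (a * g12 - b * f12).
        by rewrite /Dl; ring.
      by apply: dvdp_sub; apply: dvdp_mull.
    by rewrite !modp_eq0 // dvdp_mulr.
  + move=> [c1 c2] [r1 r2]; case/Bezout_eq1_coprimepP: cop => [[u v]] /= uv.
    set a := v * (c1 * f12 - c2 * f11); set b := v * (g11 * c2 - g12 * c1).
    exists ((a * g11) %% M, (a * g12) %% M), ((b * f11) %% M, (b * f12) %% M).
    split; first by exists a.
    split; first by exists b.
    rewrite /= -!modpD; congr pair.
    * rewrite -[LHS]r1; apply: mod_eq_of_dvd.
      have -> : c1 - (a * g11 + b * f11) = c1 * (1 - (u * M + v * Dl)) + c1 * u * M.
        by rewrite /a /b /Dl; ring.
      by rewrite uv subrr mulr0 add0r dvdp_mull.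
    * rewrite -[LHS]r2; apply: mod_eq_of_dvd.
      have -> : c2 - (a * g12 + b * f12) = c2 * (1 - (u * M + v * Dl)) + c2 * u * M.
        by rewrite /a /b /Dl; ring.
      by rewrite uv subrr mulr0 add0r dvdp_mull.
Qed.
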